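(* Let $\Delta$ be a positive integer and suppose there exists a constant $0<c_{\Delta}<1$ such that $\mathrm{es}_{\Delta}(H)\leq c_{\Delta}|V(H)|$ holds for every $\Delta$-regular finite simple graph $H$. Then $\mathrm{es}_{\Delta}(G)\leq c_{\Delta}|V(G)|$ holds for every finite simple graph $G$ with $\Delta(G)=\Delta$.
   Context: For a graph $G$ with at least one edge, $\mathrm{es}_{\Delta}(G)$ denotes the $\Delta$-edge stability number: the minimum number of edges of $G$ whose removal results in a subgraph with maximum degree $\Delta(G)-1$. *)

(* Defs.v *)
(* A finite simple graph is a symmetric irreflexive
   relation e : rel T on a finite type T (vertex set = T). *)
From mathcomp Require Import all_boot all_order all_algebra.
Set Implicit Arguments. Unset Strict Implicit. Unset Printing Implicit Defensive.

Section Graphs.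
Variable T : finType.

Definition deg (e : rel T) (x : T) : nat := #|[set y | e x y]|.

(* maximum degree Delta(G) (0 for the empty vertex set) *)
Definition maxdeg (e : rel T) : nat := \max_(x : T) deg e x.

Definition edges (e : rel T) : {set {set T}} :=
  [set [set x; y] | x in T, y in T & e x y].

Definition rm_edges (e : rel T) (F : {set {set T}}) : rel T :=
  [rel x y | e x y && ([set x; y] \notin F)].

(* es_Delta(G): the minimum number of edges of G whose removal yields a
   subgraph with maximum degree Delta(G) - 1.  (The min is over a nonempty
   family whenever G has an edge; the default #|edges e| is never used then.) *)
Definition es_Delta (e : rel T) : nat :=
  \big[minn/#|edges e|]_(F : {set {set T}} |
        (F \subset edges e) && (maxdeg (rm_edges e F) == (maxdeg e).-1)) #|F|.
End Graphs.

(* Main.v *)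
Require Import Defs.
From mathcomp Require Import all_boot all_order all_algebra.
From mathcomp Require Import zify.
Set Implicit Arguments. Unset Strict Implicit. Unset Printing Implicit Defensive.
Section G.
Variable T : finType.
Implicit Types (e : rel T) (F : {set {set T}}).

Lemma rmE e F x y : rm_edges e F x y = e x y && ([set x; y] \notin F).
Proof. by []. Qed.

Lemma deg_rm_le e F x : deg (rm_edges e F) x <= deg e x.
Proof. by apply: subset_leq_card; apply/subsetP=> y; rewrite !inE rmE => /andP[]. Qed.

Lemma deg_rm0 e x : deg (rm_edges e set0) x = deg e x.
Proof. by apply: eq_card => y; rewrite !inE rmE inE andbT. Qed.

Lemma maxdeg_rm0 e : maxdeg (rm_edges e set0) = maxdeg e.
Proof. by apply: eq_bigr=> x _; rewrite deg_rm0. Qed.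

Lemma maxdeg_leP e m : reflect (forall x, deg e x <= m) (maxdeg e <= m).
Proof.
apply: (iffP (bigmax_leqP _ _ _)) => H x; first exact: H. by move=> _; apply: H.
Qed.

Lemma deg_rmD1 e F s x : deg (rm_edges e (F :\ s)) x <= (deg (rm_edges e F) x).+1.
Proof.
rewrite /deg.
have sub : [set y | rm_edges e (F :\ s) x y] \subset
   [set y | rm_edges e F x y] :|: [set y | [set x; y] == s].
  apply/subsetP=> y; rewrite !inE !rmE => /andP[-> H] /=.
  by move: H; rewrite !inE negb_and negbK => /orP[/eqP->|->]; rewrite ?eqxx ?orbT.
apply: (leq_trans (subset_leq_card sub)); apply: (leq_trans (leq_card_setU _ _)).
rewrite -addn1 leq_add2l; apply/card_le1_eqP=> y z; rewrite !inE.
move=> /eqP Hy /eqP Hz; rewrite -Hz in Hy.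
have : y \in [set x; z] by rewrite -Hy !inE eqxx orbT.
rewrite !inE => /orP[/eqP yx|/eqP //].
have : z \in [set x; y] by rewrite Hy !inE eqxx orbT.
by rewrite yx !inE orbb => /eqP ->.
Qed.

Lemma reduce e : 0 < maxdeg e -> forall F, F \subset edges e ->
  maxdeg (rm_edges e F) <= (maxdeg e).-1 ->
  exists2 F' : {set {set T}}, F' \subset F & maxdeg (rm_edges e F') == (maxdeg e).-1.
Proof.
move=> pos F; move: {2}#|F| (leqnn #|F|) => n; elim: n F => [|n IH] F.
  rewrite leqn0 cards_eq0 => /eqP -> _ le; exfalso; move: le.
  by rewrite maxdeg_rm0; case: (maxdeg e) pos => //= k _; rewrite ltnn.
move=> Fn sF le.
case: (ltngtP (maxdeg (rm_edges e F)) (maxdeg e).-1) le => // [lt|eq] _; last first.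
  by exists F => //; rewrite eq.
have [s sF'] : exists s, s \in F.
  apply/set0Pn; apply/negP=> /eqP F0; move: lt; rewrite F0 maxdeg_rm0.
  by move: pos; lia.
have [|||F' s1 s2] := IH (F :\ s).
- by rewrite (cardsD1 s) sF' in Fn.
- exact: subset_trans (subsetDl _ _) sF.
- apply/maxdeg_leP=> x; apply: leq_trans (deg_rmD1 _ _ s x) _.
  apply: leq_trans lt; rewrite ltnS; exact: leq_bigmax.
exists F' => //; exact: subset_trans s1 (subsetDl _ _).
Qed.

Definition valid e F := (F \subset edges e) && (maxdeg (rm_edges e F) == (maxdeg e).-1).

Lemma es_le e F : valid e F -> es_Delta e <= #|F|.
Proof.
move=> v; rewrite /es_Delta; have := mem_index_enum F.
elim: (index_enum _) => //= a r IH; rewrite inE big_cons; case/orP=> [/eqP<-|/IH h].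
  by move: v; rewrite /valid => ->; rewrite geq_minl.
by case: ifP => // _; apply: leq_trans h; rewrite geq_minr.
Qed.

Lemma es_att e : 0 < maxdeg e -> exists2 F : {set {set T}}, valid e F & #|F| <= es_Delta e.
Proof.
move=> pos.
have [F0 s0 v0] : exists2 F : {set {set T}}, F \subset edges e & maxdeg (rm_edges e F) == (maxdeg e).-1.
  have [|F' s1 s2] := @reduce e pos _ (subxx (edges e)).
  - apply/maxdeg_leP=> x; rewrite /deg (_ : [set y | _] = set0) ?cards0 //.
    apply/setP=> y; rewrite !inE; apply/negP=> /andP[exy].
    by case/negP; apply/imset2P; exists x y; rewrite ?inE.
  - by exists F' => //; exact: subset_trans s1 (subxx _).
have : es_Delta e = #|edges e| \/ exists2 F : {set {set T}}, valid e F & #|F| = es_Delta e.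
  apply: (big_ind (fun m => m = #|edges e| \/ exists2 F : {set {set T}}, valid e F & #|F| = m)).
  - by left.
  - move=> a b Ha Hb; rewrite /minn; case: ifP => _; [exact Ha|exact Hb].
  - by move=> F vF; right; exists F.
case=> [->|[F vF <-]]; last by exists F.
by exists F0; [rewrite /valid s0 v0|exact: subset_leq_card].
Qed.
End G.
Lemma card_lt (D k : nat) : k <= D -> #|[set r : 'I_D | r < k]| = k.
Proof.
move=> le.
have -> : [set r : 'I_D | r < k] = (widen_ord le) @: [set: 'I_k].
  apply/setP=> r; rewrite inE; apply/idP/imsetP => [rk|[j _ ->]]; last exact: ltn_ord j.
  by exists (Ordinal rk) => //; apply: val_inj.
by rewrite card_imset ?cardsT ?card_ord //; by move=> a b /(congr1 val) /= /val_inj.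
Qed.

Lemma card_shift (D k : nat) (i : 'I_D) : k <= D ->
  #|[set j : 'I_D | (i + j) %% D < k]| = k.
Proof.
move=> le; have Dp : 0 < D by apply: leq_ltn_trans (ltn_ord i).
pose h (j : 'I_D) : 'I_D := Ordinal (ltn_pmod (i + j) Dp).
have hi : injective h.
  move=> j1 j2 /(congr1 val) /= /eqP; rewrite eqn_modDl !modn_small // => /eqP.
  exact: val_inj.
rewrite -{2}(@card_lt D k le) -(card_preimset [set r : 'I_D | r < k] hi).
by apply: eq_card => j; rewrite !inE.
Qed.

Definition Hrel (T : finType) (e : rel T) (D : nat) : rel (T * (bool * 'I_D)) :=
  fun x y => ((x.2 == y.2) && e x.1 y.1) ||
    [&& x.1 == y.1, x.2.1 != y.2.1 & (x.2.2 + y.2.2) %% D < D - deg e x.1].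
Arguments Hrel {T} e D.

Lemma Hsym (T : finType) (e : rel T) (D : nat) : symmetric e -> symmetric (Hrel e D).
Proof.
move=> s [u [b i]] [v [c j]]; rewrite /Hrel /= s [(b, i) == _]eq_sym; congr orb.
rewrite [v == u]eq_sym [c == b]eq_sym addnC; by case: (u =P v) => //= ->.
Qed.

Lemma Hirr (T : finType) (e : rel T) (D : nat) : irreflexive e -> irreflexive (Hrel e D).
Proof. by move=> irr [u [b i]]; rewrite /Hrel /= irr !eqxx. Qed.

Lemma Hdeg (T : finType) (e : rel T) (D : nat) : (forall v, deg e v <= D) ->
  forall x, deg (Hrel e D) x = D.
Proof.
move=> le [v [b i]]; rewrite /deg.
set A := [set y : T * (bool * 'I_D) | (y.2 == (b, i)) && e v y.1].
set B := [set y : T * (bool * 'I_D) | [&& y.1 == v, y.2.1 == ~~ b & (i + y.2.2) %% D < D - deg e v]].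
have -> : [set y | Hrel e D (v, (b, i)) y] = A :|: B.
  apply/setP=> [[u [c j]]]; rewrite !inE /Hrel /= [(b, i) == _]eq_sym [v == u]eq_sym.
  by case: (b); case: (c).
have dAB : A :&: B = set0.
  apply/setP=> [[u [c j]]]; rewrite !inE /= xpair_eqE.
  by case: (c =P b) => //= ->; case: (b); rewrite !andbF.
have cA : #|A| = deg e v.
  have -> : A = (fun u => (u, (b, i))) @: [set u | e v u].
    apply/setP=> [[u p]]; rewrite inE; apply/idP/imsetP => [/andP[/eqP/= -> h]|[u' h [-> ->]]].
      by exists u; rewrite ?inE.
    by rewrite /= eqxx; rewrite inE in h.
  by rewrite card_imset // => u1 u2 [].
have cB : #|B| = D - deg e v.
  rewrite -(card_shift i (leq_subr (deg e v) D)).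
  have -> : B = (fun j => (v, (~~ b, j))) @: [set j : 'I_D | (i + j) %% D < D - deg e v].
    apply/setP=> [[u [c j]]]; rewrite inE; apply/idP/imsetP.
      by case/and3P=> /= /eqP-> /eqP-> h; exists j; rewrite ?inE.
    by case=> j' h [-> -> ->]; rewrite inE in h; rewrite /= !eqxx.
  by rewrite card_imset // => j1 j2 [].
by rewrite (cardsU A B) dAB cards0 subn0 cA cB subnKC.
Qed.

Import Order.TTheory GRing.Theory Num.Theory.
Local Open Scope ring_scope.

Theorem theorem3p2 (R : realFieldType) (D : nat) (c : R) :
  (0 < D)%N -> 0 < c -> c < 1 ->
  (forall (T : finType) (e : rel T), symmetric e -> irreflexive e ->
     (forall x : T, deg e x = D) ->
     (es_Delta e)%:R <= c * #|T|%:R) ->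
  forall (T : finType) (e : rel T), symmetric e -> irreflexive e ->
    maxdeg e = D ->
    (es_Delta e)%:R <= c * #|T|%:R.
Proof.
move=> Dp c0 c1 hyp T e sym irr mdeg.
pose eH := Hrel e D.
have degle : forall v, (deg e v <= D)%N by move=> v; rewrite -mdeg; exact: leq_bigmax.
have regH := Hdeg degle.
have [v _] : exists v : T, true.
  case: (pickP (@predT T)) => [v|none]; first by exists v.
  exfalso; have : (maxdeg e <= 0)%N by apply/maxdeg_leP => x; move: (none x).
  by rewrite mdeg leqn0 => /eqP D0; rewrite D0 in Dp.
pose o : 'I_D := Ordinal Dp.
have mH : maxdeg eH = D.
  apply/eqP; rewrite eqn_leq; apply/andP; split.
    by apply/maxdeg_leP => x; rewrite regH.
  by rewrite -{1}(regH (v, (true, o))); exact: leq_bigmax.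
have [F vF Fle] : exists2 F : {set {set (T * (bool * 'I_D))}}, valid eH F & (#|F| <= es_Delta eH)%N.
  by apply: es_att; rewrite mH.
have esH := hyp _ eH (@Hsym T e D sym) (@Hirr T e D irr) regH.
pose f (p : bool * 'I_D) (u : T) : T * (bool * 'I_D) := (u, p).
have finj : forall p, injective (f p) by move=> p u1 u2 [].
pose F' p := [set s in edges e | f p @: s \in F].
have key1 : forall p, (maxdeg (rm_edges e (F' p)) <= (maxdeg e).-1)%N.
  move=> p; apply/maxdeg_leP => u.
  case/andP: vF => _ /eqP; rewrite mH => mF.
  apply: leq_trans (_ : (deg (rm_edges eH F) (u, p) <= _)%N); last first.
    by rewrite mdeg -mF; exact: leq_bigmax.
  rewrite /deg -(card_imset _ (finj p)); apply: subset_leq_card; apply/subsetP => y.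
  case/imsetP => w; rewrite !inE !rmE => /andP[euw nin] ->.
  have edge : [set u; w] \in edges e by apply/imset2P; exists u w; rewrite ?inE.
  rewrite inE edge /= imsetU1 imset_set1 in nin.
  by rewrite /eH /Hrel /= eqxx euw.
pose S := [set ps : (bool * 'I_D) * {set T} | ps.2 \in F' ps.1].
have cS : #|S| = (\sum_p #|F' p|)%N.
  rewrite -sum1_card.
  have -> : (\sum_p #|F' p| = \sum_p \sum_(s | s \in F' p) 1)%N.
    by apply: eq_bigr => p _; rewrite sum1_card.
  by rewrite pair_big_dep; apply: eq_bigl => ps; rewrite inE.
have key2 : (\sum_p #|F' p| <= #|F|)%N.
  rewrite -cS -(@card_in_imset _ _ (fun ps : (bool * 'I_D) * {set T} => f ps.1 @: ps.2) S).
    apply: subset_leq_card; apply/subsetP => s /imsetP [[p t]]; rewrite !inE /= => /andP[_ h] ->; exact: h.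
  move=> [p s] [q t]; rewrite !inE /= => /andP[se _] /andP[te _] eq.
  case/imset2P: se => a b _ _ sE.
  have : f p a \in f q @: t by rewrite -eq; apply/imsetP; exists a; rewrite // sE !inE eqxx.
  case/imsetP => w _ [_ pq]; rewrite -pq in eq *.
  by rewrite (imset_inj (finj p) eq).
have [p _ hmin] := @arg_minnP _ (true, o) predT (fun p => #|F' p|) isT.
have key3 : (#|F' p| * (2 * D) <= #|F|)%N.
  apply: leq_trans key2.
  have -> : (2 * D = #|[set: bool * 'I_D]|)%N by rewrite cardsT card_prod card_bool card_ord.
  rewrite mulnC -sum_nat_const; apply: (@leq_trans (\sum_q #|F' p|)); first by apply: eq_leq; apply: eq_bigl => q; rewrite inE.
  apply: leq_sum => q _; exact: hmin.
have mpos : (0 < maxdeg e)%N by rewrite mdeg.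
have sub' : F' p \subset edges e by apply/subsetP => s; rewrite inE => /andP[].
have [F'' s'' v''] := @reduce _ e mpos (F' p) sub' (key1 p).
have es1 : (es_Delta e <= #|F' p|)%N.
  apply: leq_trans (subset_leq_card s'').
  apply: es_le; rewrite /valid v'' andbT.
  exact: subset_trans s'' sub'.
have hN : (es_Delta e * (2 * D) <= es_Delta eH)%N.
  apply: leq_trans Fle; apply: leq_trans key3; by rewrite leq_mul2r es1 orbT.
have Mp : (0 : R) < (2 * D)%:R by rewrite ltr0n muln_gt0.
rewrite -(ler_pM2r Mp) -natrM.
apply: le_trans (_ : (es_Delta eH)%:R <= _); first by rewrite ler_nat.
apply: le_trans esH _.
by rewrite card_prod card_prod card_bool card_ord natrM mulrA mulnC.
Qed.
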